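(* Let $k\ge 0$ and let $a_i\ge b_i\ge 0$ be integers for $i=0,1,\dots,k$. Suppose that, at some moment of a game on $K_{\mathbb N}$ in which in each round Builder selects an unselected edge and Painter colours it red or blue, the coloured graph $G$ of already coloured edges contains vertex-disjoint paths $P(a_0,b_0),P(a_1,b_1),\dots,P(a_k,b_k)$. Then Builder can force, within at most $2k$ further rounds, either a red $C_3$ or a blue path on $a_0+\sum_{i=1}^k b_i$ vertices.
   Context: For integers $s,t>0$, $P(s,t)$ denotes the coloured path on $s+t$ vertices obtained from two vertex-disjoint blue paths on $s$ and $t$ vertices by joining an end of one to an end of the other by a red edge; $P(s,0)$ denotes a blue path on $s$ vertices. ''Builder can force within $r$ rounds'' means Builder has a strategy for selecting edges such that, whatever Painter does, after at most $r$ more rounds the coloured graph contains the stated structure. *)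

(* Defs.v *)
(* vertices of K_N are natural numbers. *)
From Stdlib Require Import List Arith.
Import ListNotations.

Inductive colour := Red | Blue.

(* A coloured graph: the finite list of already coloured edges (u, v, colour);
   edges are unordered, so (u,v,c) and (v,u,c) denote the same coloured edge. *)
Definition cgraph := list (nat * nat * colour).

Definition has_edge (G : cgraph) (c : colour) (u v : nat) : Prop :=
  In (u, v, c) G \/ In (v, u, c) G.

Definition selected (G : cgraph) (u v : nat) : Prop :=
  exists c, has_edge G c u v.

Definition valid_cgraph (G : cgraph) : Prop :=
  (forall u v c, In (u, v, c) G -> u <> v) /\
  (forall u v c c', has_edge G c u v -> has_edge G c' u v -> c = c').

Fixpoint path_edges (G : cgraph) (c : colour) (p : list nat) : Prop :=
  match p with
  | x :: ((y :: _) as q) => has_edge G c x y /\ path_edges G c q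
  | _ => True
  end.

Definition blue_path (G : cgraph) (p : list nat) : Prop :=
  NoDup p /\ path_edges G Blue p.

Definition has_blue_path (G : cgraph) (m : nat) : Prop :=
  exists p, length p = m /\ blue_path G p.

Definition has_red_C3 (G : cgraph) : Prop :=
  exists u v w, u <> v /\ v <> w /\ u <> w /\
    has_edge G Red u v /\ has_edge G Red v w /\ has_edge G Red u w.

(* The list vs of vertices spans a copy of P(s,t) in G: vs = xs ++ ys where
   xs is a blue path on s vertices, ys a blue path on t vertices, and (if t > 0)
   an end of xs is joined to an end of ys by a red edge (P(s,0) = blue path). *)
Definition is_P (G : cgraph) (s t : nat) (vs : list nat) : Prop :=
  exists xs ys, vs = xs ++ ys /\ NoDup vs /\
    length xs = s /\ length ys = t /\
    path_edges G Blue xs /\ path_edges G Blue ys /\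
    (t = 0 \/ exists xs' x y ys', xs = xs' ++ [x] /\ ys = y :: ys' /\
                                  has_edge G Red x y).

Inductive forces (Q : cgraph -> Prop) : nat -> cgraph -> Prop :=
| forces_now : forall r G, Q G -> forces Q r G
| forces_step : forall r G u v, u <> v -> ~ selected G u v ->
    (forall c, forces Q r ((u, v, c) :: G)) -> forces Q (S r) G.

(* Main.v *)
Require Import Defs.
From Stdlib Require Import List Arith Lia Permutation Classical.
Import ListNotations.

Section Aux.

Lemma forces_S Q r G : forces Q r G -> forces Q (S r) G.
Proof.
  induction 1.
  - apply forces_now; auto.
  - eapply forces_step; eauto.
Qed.

Lemma forces_le Q r r' G : r <= r' -> forces Q r G -> forces Q r' G.
Proof. induction 1; auto. intros; apply forces_S; auto. Qed.

Lemma has_edge_mono G H c u v : incl G H -> has_edge G c u v -> has_edge H c u v.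
Proof. unfold has_edge; intros Hi [h|h]; [left|right]; auto. Qed.

Lemma has_edge_sym G c u v : has_edge G c u v -> has_edge G c v u.
Proof. unfold has_edge; tauto. Qed.

Lemma pe_mono G H c l : incl G H -> path_edges G c l -> path_edges H c l.
Proof.
  intros Hi. induction l as [|a l IH]; simpl; auto.
  destruct l as [|b l]; auto. intros [h1 h2]; split; eauto using has_edge_mono.
Qed.

Lemma isP_mono G H s t vs : incl G H -> is_P G s t vs -> is_P H s t vs.
Proof.
  intros Hi (xs & ys & e & nd & l1 & l2 & p1 & p2 & r).
  exists xs, ys; repeat split; eauto using pe_mono.
  destruct r as [r|(xs' & x & y & ys' & e1 & e2 & h)]; [left; auto|right].
  exists xs', x, y, ys'; repeat split; eauto using has_edge_mono.
Qed.

Lemma pe_app G c l1 x y l2 : path_edges G c (l1 ++ [x]) -> path_edges G c (y :: l2) ->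
  has_edge G c x y -> path_edges G c (l1 ++ x :: y :: l2).
Proof.
  induction l1 as [|a l1 IH]; simpl.
  - intros _ H2 H3; split; auto.
  - destruct l1 as [|b l1']; simpl in *.
    + intros [Hab _] H2 H3. split; auto.
    + intros [Hab Hr] H2 H3. split; auto. apply IH; auto.
Qed.

Lemma pe_rev0 G c l a : path_edges G c (a :: l) -> path_edges G c (rev l ++ [a]).
Proof.
  revert a; induction l as [|b l IH]; intros a; simpl; auto.
  intros [h1 h2]. rewrite <- app_assoc. simpl.
  apply pe_app; simpl; auto. apply has_edge_sym; auto.
Qed.

Lemma pe_rev G c l : path_edges G c l -> path_edges G c (rev l).
Proof. destruct l; simpl; auto. apply pe_rev0. Qed.

Lemma pe_prefix G c l1 l2 : path_edges G c (l1 ++ l2) -> path_edges G c l1.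
Proof.
  induction l1 as [|a l1 IH]; simpl; auto.
  destruct l1 as [|b l1']; simpl in *; auto. intros [h1 h2]; split; auto.
  apply IH; auto.
Qed.

Lemma nodup_mid (A B C : list nat) : NoDup (A ++ B ++ C) -> NoDup (A ++ C).
Proof.
  induction A as [|a A IH]; simpl.
  - apply NoDup_app_remove_l.
  - intros h; inversion h; subst. constructor; auto.
    intros hi; apply H1. apply in_app_or in hi; apply in_or_app.
    destruct hi; auto. right; apply in_or_app; auto.
Qed.

Lemma nodup_neq (A B : list nat) u v : NoDup (A ++ B) -> In u A -> In v B -> u <> v.
Proof.
  induction A as [|a A IH]; simpl; [tauto|].
  intros h [e|i] hv; inversion h; subst; auto.
  intro; subst. apply H1; apply in_or_app; auto.
Qed.

Lemma forces_edge Q r G u v : u <> v ->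
  (forall c H, incl G H -> has_edge H c u v -> forces Q r H) -> forces Q (S r) G.
Proof.
  intros neq h. destruct (classic (selected G u v)) as [[c hc]|ns].
  - apply forces_S. apply (h c G); auto. apply incl_refl.
  - apply forces_step with u v; auto. intros c. apply (h c).
    + intros e ie; right; auto.
    + left; left; auto.
Qed.

End Aux.

Definition QQ n (H : cgraph) := has_red_C3 H \/ has_blue_path H n.

Lemma main (a b : nat -> nat) (P : nat -> list nat) : forall k j G M n,
  path_edges G Blue M ->
  (forall i, j <= i -> i < j + k -> b i <= a i /\ is_P G (a i) (b i) (P i)) ->
  NoDup (M ++ flat_map P (seq j k)) ->
  n <= length M + list_sum (map b (seq j k)) ->
  forces (QQ n) (2*k) G.
Proof.
  induction k as [|k IH]; intros j G M n hM hP hN hn.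
  - apply forces_now. right. simpl in *. rewrite app_nil_r in hN.
    exists (firstn n M). split.
    + apply firstn_length_le; lia.
    + rewrite <- (firstn_skipn n M) in hN, hM. split.
      * eapply NoDup_app_remove_r; eauto.
      * eapply pe_prefix; eauto.
  - replace (2 * S k) with (S (S (2 * k))) by lia.
    simpl in hN, hn.
    set (R := flat_map P (seq (S j) k)) in *.
    assert (hP' : forall H, incl G H -> forall i, S j <= i -> i < S j + k ->
               b i <= a i /\ is_P H (a i) (b i) (P i)).
    { intros H hi i h1 h2. destruct (hP i) as [u v]; try lia. split; auto.
      eapply isP_mono; eauto. }
    destruct (hP j) as [hab (xs & ys & e & nd & l1 & l2 & p1 & p2 & rr)]; try lia.
    rewrite e in hN.
    destruct (Nat.eq_dec (b j) 0) as [b0|bn].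
    { apply forces_S, forces_S. apply (IH (S j) G M); auto.
      - apply hP'. apply incl_refl.
      - exact (nodup_mid M (xs ++ ys) R hN).
      - lia. }
    destruct rr as [rr|(xs' & x1 & y1 & ys' & e1 & e2 & hr)]; [lia|].
    destruct M as [|m0 M0].
    { apply forces_S, forces_S. apply (IH (S j) G xs); auto.
      - apply hP'. apply incl_refl.
      - simpl in hN. rewrite <- app_assoc in hN. exact (nodup_mid xs ys R hN).
      - simpl in hn. lia. }
    destruct (exists_last (l:=m0 :: M0)) as [M' [x eM]]; [discriminate|].
    rewrite eM in hN, hM, hn. clear eM m0 M0. subst xs ys.
    assert (hxy : x <> y1).
    { apply (nodup_neq (M' ++ [x]) (((xs' ++ [x1]) ++ y1 :: ys') ++ R) x y1 hN).
      - apply in_or_app; right; left; auto.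
      - apply in_or_app; left; apply in_or_app; right; left; auto. }
    assert (hxx : x <> x1).
    { apply (nodup_neq (M' ++ [x]) (((xs' ++ [x1]) ++ y1 :: ys') ++ R) x x1 hN).
      - apply in_or_app; right; left; auto.
      - apply in_or_app; left; apply in_or_app; left; apply in_or_app; right; left; auto. }
    assert (hyx : x1 <> y1).
    { rewrite e in nd.
      apply (nodup_neq (xs' ++ [x1]) (y1 :: ys') x1 y1 nd).
      - apply in_or_app; right; left; auto.
      - left; auto. }
    apply forces_edge with x y1; auto.
    intros c H1 i1 he1. destruct c.
    +
      apply forces_edge with x x1; auto.
      intros d H2 i2 he2. destruct d.
      * apply forces_now. left. exists x, y1, x1.
        repeat split; auto.
        -- eapply has_edge_mono; eauto.
        -- apply has_edge_sym. eapply has_edge_mono; [|eauto]. eapply incl_tran; eauto.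
      * apply (IH (S j) H2 ((M' ++ [x]) ++ rev (xs' ++ [x1]))).
        -- rewrite rev_app_distr. simpl. rewrite <- app_assoc. simpl.
           apply pe_app.
           ++ eapply pe_mono; [|eauto]. eapply incl_tran; eauto.
           ++ replace (x1 :: rev xs') with (rev (xs' ++ [x1]))
                by (rewrite rev_app_distr; reflexivity).
              apply pe_rev.
              eapply pe_mono; [|eauto]. eapply incl_tran; eauto.
           ++ auto.
        -- apply hP'. eapply incl_tran; eauto.
        -- assert (h := hN).
           rewrite <- (app_assoc (xs' ++ [x1]) (y1 :: ys') R) in h.
           rewrite (app_assoc (M' ++ [x]) (xs' ++ [x1])) in h.
           apply nodup_mid in h.
           eapply Permutation_NoDup; [|exact h].
           apply Permutation_app_tail, Permutation_app_head, Permutation_rev.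
        -- rewrite length_app, length_rev. lia.
    + apply forces_S.
      apply (IH (S j) H1 ((M' ++ [x]) ++ y1 :: ys')).
      * rewrite <- app_assoc. simpl. apply pe_app; auto.
        -- exact (pe_mono _ _ _ _ i1 hM).
        -- exact (pe_mono _ _ _ _ i1 p2).
      * apply hP'; auto.
      * assert (h := hN).
        rewrite <- (app_assoc (xs' ++ [x1]) (y1 :: ys') R) in h.
        apply nodup_mid in h. rewrite <- app_assoc. exact h.
      * clear -hn l2. rewrite !length_app in *; simpl in *; lia.
Qed.

Theorem lemma2 (k : nat) (a b : nat -> nat) (G : cgraph) (P : nat -> list nat) :
  (forall i, i <= k -> b i <= a i) ->
  valid_cgraph G ->
  (forall i, i <= k -> is_P G (a i) (b i) (P i)) ->
  NoDup (flat_map P (seq 0 (S k))) ->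
  forces (fun H => has_red_C3 H \/
                   has_blue_path H (a 0 + list_sum (map b (seq 1 k))))
         (2 * k) G.
Proof.
  intros hab _ hP hN.
  destruct (hP 0) as (xs & ys & e & nd & l1 & l2 & p1 & p2 & rr); [lia|].
  apply (main a b P k 1 G xs); auto.
  - intros i h1 h2. split; [apply hab|apply hP]; lia.
  - simpl in hN. rewrite e in hN. rewrite <- app_assoc in hN.
    apply (nodup_mid xs ys). auto.
  - lia.
Qed.
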